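(* Define $E:[0,\pi/2]\to\mathbb{R}$ by $E(0)=0$ and $E(\alpha)=\frac{1}{\sin\alpha}\left(\int_0^\alpha\sqrt{\cos t}\,dt\right)^2$ for $\alpha\in(0,\pi/2]$. Then $E$ is concave on $[0,\pi/2]$, with $E''(\alpha)<0$ for all $\alpha\in(0,\pi/2)$, and $E$ is strictly sub-additive: for all $\alpha,\beta>0$ with $\alpha+\beta\le\pi/2$, $$E(\alpha+\beta)<E(\alpha)+E(\beta).$$ *)

(* Defs.v *)
From Stdlib Require Import Reals Lra ClassicalEpsilon.
Open Scope R_scope.

Definition integrand (t : R) : R := sqrt (cos t).

(* RiemannInt does not
   depend on the integrability proof (RiemannInt_P5), so we pick the value
   given by any integrability proof; the default 0 is never used for
   a in [0, PI/2], where the integrand is continuous. *)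
Definition I (a : R) : R :=
  epsilon (inhabits 0)
    (fun l => exists pr : Riemann_integrable integrand 0 a, RiemannInt pr = l).

Definition E (a : R) : R :=
  if Rle_dec a 0 then 0 else (I a) ^ 2 / sin a.

(* Main.v *)
Require Import Defs.
From Stdlib Require Import Reals Lra ClassicalEpsilon.
From Coquelicot Require Import Coquelicot.
Open Scope R_scope.

Definition J (x:R) : R := RInt integrand 0 x.

Lemma integrand_cont : forall x, continuous integrand x.
Proof. intros x. unfold integrand. apply continuous_sqrt_comp.
apply (ex_derive_continuous (K:=R_AbsRing) (V:=R_NormedModule) cos). auto_derive. easy. Qed.

Lemma ex_int : forall a b, ex_RInt integrand a b.
Proof. intros; apply (ex_RInt_continuous (V:=R_CompleteNormedModule)); intros; apply integrand_cont. Qed.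

Lemma I_J : forall a, I a = J a.
Proof. intros a. unfold I.
destruct (epsilon_spec (inhabits 0) (fun l => exists pr : Riemann_integrable integrand 0 a, RiemannInt pr = l)) as [pr Hpr].
- exists (RiemannInt (ex_RInt_Reals_0 _ _ _ (ex_int 0 a))). now exists (ex_RInt_Reals_0 _ _ _ (ex_int 0 a)).
- rewrite <- Hpr. unfold J. symmetry; apply RInt_Reals.
Qed.

Lemma J_deriv : forall y, is_derive J y (sqrt (cos y)).
Proof. intros y. change (sqrt (cos y)) with (integrand y).
apply (is_derive_RInt integrand J 0). apply filter_forall. intros. apply (RInt_correct (V:=R_CompleteNormedModule)). apply ex_int.
apply integrand_cont. Qed.

Lemma J0 : J 0 = 0.
Proof. unfold J. rewrite RInt_point. reflexivity. Qed.

Lemma DJ : forall y, Derive J y = sqrt (cos y).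
Proof. intros; apply is_derive_unique, J_deriv. Qed.

Lemma cos_pos_in : forall c, -(PI/2) < c < PI/2 -> 0 < cos c.
Proof. intros c [H1 H2]. now apply cos_gt_0. Qed.

Lemma h_pos : forall x, 0 < x < PI/2 -> J x < sin x / sqrt (cos x).
Proof.
intros x Hx.
assert (HPI : 0 < PI) by apply PI_RGT_0.
destruct (MVT_cor2 (fun y => sin y / sqrt (cos y) - J y)
  (fun y => sin y ^ 2 / (2 * sqrt (cos y) ^ 3)) 0 x) as [c [Hc1 Hc2]].
- lra.
- intros c Hc. apply is_derive_Reals.
  assert (Hcc : 0 < cos c) by (apply cos_pos_in; lra).
  auto_derive.
  + split. apply Hcc. split. apply Rgt_not_eq, sqrt_lt_R0, Hcc. split.
    exists (sqrt (cos c)). apply J_deriv. easy.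
  + rewrite DJ. set (w := sqrt (cos c)).
    assert (Hw : w * w = cos c) by (apply sqrt_sqrt; lra).
    assert (Hw0 : 0 < w) by (apply sqrt_lt_R0; lra).
    rewrite <- Hw. field. lra.
- rewrite J0, sin_0, Rdiv_0_l in Hc1.
  assert (Hcc : 0 < cos c) by (apply cos_pos_in; lra).
  assert (Hs : 0 < sin c) by (apply sin_gt_0; lra).
  assert (Hw0 : 0 < sqrt (cos c)) by (apply sqrt_lt_R0; lra).
  assert (0 < sin c ^ 2 / (2 * sqrt (cos c) ^ 3) * (x - 0)).
  { apply Rmult_lt_0_compat; [|lra]. apply Rdiv_lt_0_compat. nra. 
    apply Rmult_lt_0_compat; [lra|]. apply pow_lt; lra. }
  lra.
Qed.

Lemma g_pos : forall x, 0 < x < PI/2 ->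
  2 * sin x * cos x * sqrt (cos x) / (sin x ^ 2 + 2 * cos x ^ 2) < J x.
Proof.
intros x Hx.
assert (HPI : 0 < PI) by apply PI_RGT_0.
destruct (MVT_cor2 (fun y => J y - 2 * sin y * cos y * sqrt (cos y) / (sin y ^ 2 + 2 * cos y ^ 2))
  (fun y => 4 * sqrt (cos y) * sin y ^ 2 * (sin y ^ 2 + cos y ^ 2) / (sin y ^ 2 + 2 * cos y ^ 2) ^ 2) 0 x) as [c [Hc1 Hc2]].
- lra.
- intros c Hc. apply is_derive_Reals.
  assert (Hcc : 0 < cos c) by (apply cos_pos_in; lra).
  assert (Hd : 0 < sin c ^ 2 + 2 * cos c ^ 2) by nra.
  auto_derive.
  + split. exists (sqrt (cos c)). apply J_deriv. split. apply Hcc. split.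
    apply Rgt_not_eq. simpl. nra. easy.
  + rewrite DJ. set (w := sqrt (cos c)).
    assert (Hw : w * w = cos c) by (apply sqrt_sqrt; lra).
    assert (Hw0 : 0 < w) by (apply sqrt_lt_R0; lra).
    revert Hd. rewrite <- Hw. intros Hd. field. split; simpl; nra.
- rewrite J0, sin_0 in Hc1.
  assert (Hcc : 0 < cos c) by (apply cos_pos_in; lra).
  assert (Hs : 0 < sin c) by (apply sin_gt_0; lra).
  assert (Hw0 : 0 < sqrt (cos c)) by (apply sqrt_lt_R0; lra).
  assert (Hd : 0 < sin c ^ 2 + 2 * cos c ^ 2) by nra.
  assert (0 < 4 * sqrt (cos c) * sin c ^ 2 * (sin c ^ 2 + cos c ^ 2) / (sin c ^ 2 + 2 * cos c ^ 2) ^ 2 * (x - 0)).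
  { apply Rmult_lt_0_compat; [|lra]. apply Rdiv_lt_0_compat. 
    apply Rmult_lt_0_compat; [|nra]. apply Rmult_lt_0_compat; [lra|]. nra.
    apply pow_lt; lra. }
  replace (2 * 0 * cos 0 * sqrt (cos 0) / (0 ^ 2 + 2 * cos 0 ^ 2)) with 0 in Hc1
    by (rewrite cos_0; field).
  lra.
Qed.

Definition Ed1 (y : R) : R := (2 * J y * sqrt (cos y) * sin y - J y ^ 2 * cos y) / sin y ^ 2.

Lemma E_deriv : forall a, 0 < a < PI -> is_derive E a (Ed1 a).
Proof.
intros a Ha.
assert (Hs : 0 < sin a) by (apply sin_gt_0; lra).
apply (is_derive_ext_loc (fun y => J y ^ 2 / sin y)).
- exists (mkposreal a (proj1 Ha)). intros t Ht.
  change (Rabs (t - a) < a) in Ht. apply Rabs_lt_between' in Ht.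
  unfold E. destruct (Rle_dec t 0). lra. now rewrite I_J.
- auto_derive.
  + split. exists (sqrt (cos a)). apply J_deriv. split. lra. easy.
  + replace (Derive (fun x => J x) a) with (sqrt (cos a)) by (symmetry; apply is_derive_unique, J_deriv). unfold Ed1. field. lra.
Qed.

Definition Ed2 (y : R) : R :=
  (sqrt (cos y) * J y - sin y) * ((sin y ^ 2 + 2 * cos y ^ 2) * J y - 2 * sin y * cos y * sqrt (cos y))
  / (sin y ^ 3 * sqrt (cos y)).

Lemma E1_deriv : forall a, 0 < a < PI/2 -> is_derive Ed1 a (Ed2 a).
Proof.
intros a Ha.
assert (HPI : 0 < PI) by apply PI_RGT_0.
assert (Hs : 0 < sin a) by (apply sin_gt_0; lra).
assert (Hcc : 0 < cos a) by (apply cos_pos_in; lra).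
unfold Ed1. auto_derive.
- split. exists (sqrt (cos a)). apply J_deriv. split. lra. split.
  exists (sqrt (cos a)). apply J_deriv. split. apply Rgt_not_eq; nra. easy.
- replace (Derive (fun x => J x) a) with (sqrt (cos a)) by (symmetry; apply is_derive_unique, J_deriv). unfold Ed2. set (w := sqrt (cos a)).
  assert (Hw : w * w = cos a) by (apply sqrt_sqrt; lra).
  assert (Hw0 : 0 < w) by (apply sqrt_lt_R0; lra).
  rewrite <- Hw. field. lra.
Qed.

Lemma E2_neg : forall a, 0 < a < PI/2 -> Ed2 a < 0.
Proof.
intros a Ha.
assert (HPI : 0 < PI) by apply PI_RGT_0.
assert (Hs : 0 < sin a) by (apply sin_gt_0; lra).
assert (Hcc : 0 < cos a) by (apply cos_pos_in; lra).
assert (Hw0 : 0 < sqrt (cos a)) by (apply sqrt_lt_R0; lra).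
assert (Hd : 0 < sin a ^ 2 + 2 * cos a ^ 2) by nra.
pose proof (h_pos a Ha) as H1. pose proof (g_pos a Ha) as H2.
unfold Ed2. apply Rdiv_neg_pos.
- apply Rmult_neg_pos.
  + apply (Rmult_lt_compat_l (sqrt (cos a))) in H1; [|lra].
    replace (sqrt (cos a) * (sin a / sqrt (cos a))) with (sin a) in H1 by (field; lra). lra.
  + apply (Rmult_lt_compat_l (sin a ^ 2 + 2 * cos a ^ 2)) in H2; [|lra].
    replace ((sin a ^ 2 + 2 * cos a ^ 2) * (2 * sin a * cos a * sqrt (cos a) / (sin a ^ 2 + 2 * cos a ^ 2)))
      with (2 * sin a * cos a * sqrt (cos a)) in H2 by (field; lra). lra.
- apply Rmult_lt_0_compat; [apply pow_lt|]; lra.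
Qed.

Lemma E_0 : E 0 = 0.
Proof. unfold E. destruct (Rle_dec 0 0); [reflexivity | lra]. Qed.

Lemma E_bound : forall y, 0 < y < PI/2 -> 0 <= E y <= sin y / cos y.
Proof.
intros y Hy.
assert (HPI : 0 < PI) by apply PI_RGT_0.
assert (Hs : 0 < sin y) by (apply sin_gt_0; lra).
assert (Hcc : 0 < cos y) by (apply cos_pos_in; lra).
assert (Hw0 : 0 < sqrt (cos y)) by (apply sqrt_lt_R0; lra).
assert (Hw : sqrt (cos y) * sqrt (cos y) = cos y) by (apply sqrt_sqrt; lra).
pose proof (h_pos y Hy) as H1. pose proof (g_pos y Hy) as H2.
assert (Hr : 0 < 2 * sin y * cos y * sqrt (cos y) / (sin y ^ 2 + 2 * cos y ^ 2)).
{ apply Rdiv_lt_0_compat. apply Rmult_lt_0_compat; [|lra]. nra. nra. }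
unfold E. destruct (Rle_dec y 0). lra. rewrite I_J.
assert (HJ : J y * sqrt (cos y) < sin y).
{ apply (Rmult_lt_compat_r (sqrt (cos y))) in H1; [|lra].
  replace (sin y / sqrt (cos y) * sqrt (cos y)) with (sin y) in H1 by (field; lra). lra. }
split.
- apply Rlt_le, Rdiv_lt_0_compat; [|lra]. apply pow_lt; lra.
- apply (Rmult_le_reg_r (sin y * cos y)). nra.
  replace (J y ^ 2 / sin y * (sin y * cos y)) with ((J y * sqrt (cos y)) * (J y * sqrt (cos y))).
  2:{ rewrite <- Hw at 3. field. lra. }
  replace (sin y / cos y * (sin y * cos y)) with (sin y * sin y) by (field; lra).
  assert (0 < J y * sqrt (cos y)) by nra. nra.
Qed.

Lemma E_cont0 : continuity_pt E 0.
Proof.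
assert (HPI : 0 < PI) by apply PI_RGT_0.
assert (Ht : continuity_pt (fun y => sin y / cos y) 0).
{ apply derivable_continuous_pt. exists 1. apply is_derive_Reals. auto_derive.
  rewrite cos_0; lra. rewrite sin_0, cos_0; field. }
intros eps Heps. destruct (Ht eps Heps) as [d [Hd Hd2]].
exists (Rmin d (PI/2)). split. apply Rmin_glb_lt; lra.
intros y [_ Hy]. simpl in *. unfold Rdist in *. rewrite E_0.
rewrite Rminus_0_r in Hy.
destruct (Rle_dec y 0).
- unfold E. destruct (Rle_dec y 0); [|lra]. rewrite Rminus_0_r, Rabs_R0. lra.
- assert (Hy2 : 0 < y < PI/2).
  { split. lra. apply Rabs_def2 in Hy. pose proof (Rmin_r d (PI/2)). lra. }
  pose proof (E_bound y Hy2).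
  assert (Hy3 : Rabs (y - 0) < d).
  { rewrite Rminus_0_r. pose proof (Rmin_l d (PI/2)). lra. }
  assert (HD : D_x no_cond 0 y) by (split; [exact Logic.I | lra]). specialize (Hd2 y (conj HD Hy3)). simpl in Hd2. unfold Rdist in Hd2.
  rewrite sin_0, cos_0 in Hd2. replace (0/1) with 0 in Hd2 by field.
  rewrite Rminus_0_r in *. rewrite Rabs_right by lra.
  rewrite Rabs_right in Hd2. lra.
  assert (0 < sin y) by (apply sin_gt_0; lra).
  assert (0 < cos y) by (apply cos_pos_in; lra).
  apply Rle_ge, Rlt_le, Rdiv_lt_0_compat; lra.
Qed.

Lemma E_cont : forall c, 0 <= c <= PI/2 -> continuity_pt E c.
Proof.
intros c Hc. assert (HPI : 0 < PI) by apply PI_RGT_0.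
destruct (Req_dec c 0) as [->|Hn]. apply E_cont0.
apply derivable_continuous_pt. exists (Ed1 c). apply is_derive_Reals, E_deriv. lra.
Qed.

Lemma E_mvt : forall x z, 0 <= x < z -> z <= PI/2 ->
  exists c, x < c < z /\ E z - E x = Ed1 c * (z - x).
Proof.
intros x z Hx Hz. assert (HPI : 0 < PI) by apply PI_RGT_0.
assert (pr1 : forall c, x < c < z -> derivable_pt E c).
{ intros c Hc. exists (Ed1 c). apply is_derive_Reals, E_deriv. lra. }
destruct (MVT E id x z pr1 (fun c _ => derivable_pt_id c)) as [c [P Hc]].
- lra.
- intros c Hc. apply E_cont. lra.
- intros c Hc. apply derivable_continuous_pt, derivable_pt_id.
- exists c. split. exact P.
  rewrite (derive_pt_eq_0 E c (Ed1 c) (pr1 c P)) in Hc.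
  2:{ apply is_derive_Reals, E_deriv. lra. }
  rewrite derive_pt_id in Hc. unfold id in Hc. lra.
Qed.

Lemma E1_decr : forall p q, 0 < p -> p < q -> q < PI/2 -> Ed1 q < Ed1 p.
Proof.
intros p q Hp Hpq Hq.
destruct (MVT_cor2 Ed1 Ed2 p q Hpq) as [c [Hc1 Hc2]].
- intros c Hc. apply is_derive_Reals, E1_deriv. lra.
- assert (Ed2 c < 0) by (apply E2_neg; lra).
  assert (Ed2 c * (q - p) < 0) by (apply Rmult_neg_pos; lra). lra.
Qed.

Lemma three_point : forall x y t, 0 <= x -> x < y -> y <= PI/2 -> 0 < t < 1 ->
  t * E x + (1 - t) * E y < E (t * x + (1 - t) * y).
Proof.
intros x y t Hx Hxy Hy Ht.
set (z := t * x + (1 - t) * y).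
assert (Hz1 : z - x = (1 - t) * (y - x)) by (unfold z; ring).
assert (Hz2 : y - z = t * (y - x)) by (unfold z; ring).
assert (Hxz : x < z) by (assert (0 < (1 - t) * (y - x)) by (apply Rmult_lt_0_compat; lra); lra).
assert (Hzy : z < y) by (assert (0 < t * (y - x)) by (apply Rmult_lt_0_compat; lra); lra).
destruct (E_mvt x z) as [c1 [Hc1 Ec1]]; [lra|lra|].
destruct (E_mvt z y) as [c2 [Hc2 Ec2]]; [lra|lra|].
assert (Hd : Ed1 c2 < Ed1 c1) by (apply E1_decr; lra).
assert (Hpos : 0 < t * (1 - t) * (y - x) * (Ed1 c1 - Ed1 c2)).
{ repeat apply Rmult_lt_0_compat; lra. }
assert (Heq : t * E x + (1 - t) * E y - E z = - (t * (1 - t) * (y - x) * (Ed1 c1 - Ed1 c2))).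
{ replace (E x) with (E z - Ed1 c1 * (z - x)) by lra.
  replace (E y) with (E z + Ed1 c2 * (y - z)) by lra.
  rewrite Hz1, Hz2. ring. }
lra.
Qed.

Theorem proposition4p1 :
  (forall x y t : R, 0 <= x <= PI / 2 -> 0 <= y <= PI / 2 -> 0 <= t <= 1 ->
     t * E x + (1 - t) * E y <= E (t * x + (1 - t) * y)) /\
  (exists E' : R -> R,
     (forall a : R, 0 < a < PI / 2 -> derivable_pt_lim E a (E' a)) /\
     (forall a : R, 0 < a < PI / 2 ->
        exists E'' : R, derivable_pt_lim E' a E'' /\ E'' < 0)) /\
  (forall a b : R, 0 < a -> 0 < b -> a + b <= PI / 2 ->
     E (a + b) < E a + E b).
Proof.
assert (HPI : 0 < PI) by apply PI_RGT_0.
split; [|split].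
- intros x y t Hx Hy Ht.
  destruct (Req_dec t 0) as [->|Ht0].
  { replace (0 * x + (1 - 0) * y) with y by ring. lra. }
  destruct (Req_dec t 1) as [->|Ht1].
  { replace (1 * x + (1 - 1) * y) with x by ring. lra. }
  destruct (Rtotal_order x y) as [Hlt|[Heq|Hgt]].
  + apply Rlt_le, three_point; lra.
  + subst y. replace (t * x + (1 - t) * x) with x by ring. lra.
  + pose proof (three_point y x (1 - t)) as H.
    replace ((1 - t) * y + (1 - (1 - t)) * x) with (t * x + (1 - t) * y) in H by ring.
    apply Rlt_le. replace (t * E x + (1 - t) * E y) with ((1 - t) * E y + (1 - (1 - t)) * E x) by ring.
    apply H; lra.
- exists Ed1. split.
  + intros a Ha. apply is_derive_Reals, E_deriv. lra.
  + intros a Ha. exists (Ed2 a). split. apply is_derive_Reals, E1_deriv. exact Ha. apply E2_neg, Ha.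
- intros a b Ha Hb Hab.
  pose proof (three_point 0 (a + b) (b / (a + b))) as H1.
  pose proof (three_point 0 (a + b) (a / (a + b))) as H2.
  replace (b / (a + b) * 0 + (1 - b / (a + b)) * (a + b)) with a in H1 by (field; lra).
  replace (a / (a + b) * 0 + (1 - a / (a + b)) * (a + b)) with b in H2 by (field; lra).
  rewrite E_0 in H1, H2.
  assert (Hb1 : 0 < b / (a + b) < 1).
  { split. apply Rdiv_lt_0_compat; lra. apply (Rmult_lt_reg_r (a + b)); [lra|]. field_simplify; lra. }
  assert (Ha1 : 0 < a / (a + b) < 1).
  { split. apply Rdiv_lt_0_compat; lra. apply (Rmult_lt_reg_r (a + b)); [lra|]. field_simplify; lra. }
  specialize (H1 (Rle_refl 0) ltac:(lra) Hab Hb1).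
  specialize (H2 (Rle_refl 0) ltac:(lra) Hab Ha1).
  assert (Hsum : (1 - b / (a + b)) + (1 - a / (a + b)) = 1) by (field; lra).
  assert (E (a + b) = (1 - b / (a + b)) * E (a + b) + (1 - a / (a + b)) * E (a + b)).
  { rewrite <- Rmult_plus_distr_r, Hsum. ring. }
  lra.
Qed.
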